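(* Let $T$ be a bounded saturation theory, let $G$ and $E$ be finite sets of predicates of $T$, and let $\tau_e := \mathit{SDP}_T(G,E)$. Then for every subset $G' \subseteq G$, $[\tau_e]_{G'} = {\tt true}$ if and only if $\mathit{DP}_T(G' \cup \widetilde{E})$ returns UNSATISFIABLE.
   Context: A predicate is an atomic formula or its negation; a finite set of predicates is identified with the conjunction of its elements. The theory $T$ comes with inference rules; a rule instance is written $g \mathrel{:-} g_1,\dots,g_k$, meaning that $g$ (a predicate, or the contradiction symbol $\bot$) can be derived in one step from predicates $g_1,\dots,g_k$. For a set $H$ of predicates, $\widetilde{H} := \{\neg h : h \in H\}$. Saturation procedure $\mathrm{Sat}_N(H)$ (for a finite set $H$ of predicates and integer $N\ge 0$): (1) $W := H$. (2) Repeat $N$ times: set $W' := W$; for every predicate $g \notin W'$ for which there is a rule instance $g \mathrel{:-} g_1,\dots,g_k$ with all $g_j \in W'$, add $g$ to $W$. (3) If there is a rule instance $\bot \mathrel{:-} g_1,\dots,g_k$ with all $g_j\in W$, return UNSATISFIABLE, otherwise SATISFIABLE. $T$ is a bounded saturation theory if there is a function $d_T$ assigning to each finite set $H$ of predicates a natural number $d_T(H)$ such that for every $N \ge d_T(H)$, $\mathrm{Sat}_N(H)$ returns UNSATISFIABLE iff $H$ is unsatisfiable in $T$. Write $\mathit{DP}_T(H) := \mathrm{Sat}_{d_T(H)}(H)$ and, for a finite set $S$, $D_T(S) := \max\{d_T(S') : S' \subseteq S\}$. Symbolic decision procedure $\mathit{SDP}_T(G,E)$: introduce a Boolean variable $b_g$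 for each $g\in G$ (the set $B_G$). Let $N := D_T(G\cup\widetilde{E})$. (1) $W := G \cup \widetilde{E}$; set $\tau_{(g,0)} := b_g$ for $g\in G$ and $\tau_{(\neg e_i,0)} := {\tt true}$ for $e_i\in E$. (2) For $i = 1,\dots,N$: $W' := W$; set $S(g) := \emptyset$ for every predicate $g$; for every $g\in W'$ add $\tau_{(g,i-1)}$ to $S(g)$; for every predicate $g$ and every rule instance $g \mathrel{:-} g_1,\dots,g_k$ with all $g_m \in W'$, add the conjunction $\bigwedge_{m=1}^k \tau_{(g_m,i-1)}$ to $S(g)$ and add $g$ to $W$; then for each $g \in W$ set $\tau_{(g,i)} := \bigvee_{d\in S(g)} d$ and $\tau_{(g,\top)} := \tau_{(g,i)}$. (3) Let $S(e)$ be the set of conjunctions $\bigwedge_{m=1}^k \tau_{(g_m,\top)}$ over all rule instances $\bot \mathrel{:-} g_1,\dots,g_k$ with $\{g_1,\dots,g_k\}\subseteq W$, and set $\tau_e := \bigvee_{d\in S(e)} d$ (empty disjunction is ${\tt false}$). (4) Return $\tau_e$, a negation-free Boolean expression (with shared subexpressions) whose leaves are in $B_G$ or are constants. For a Boolean expression $\tau$ with leaves in $B_G$ and $G'\subseteq G$, $[\tau]_{G'}$ is the truth value of $\tau$ obtained by replacing each leaf $b_g$ by ${\tt true}$ if $g\in G'$ and ${\tt false}$ otherwise, with $\wedge,\vee$ interpreted as usual. *)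

(* Defs.v *)
From HB Require Import structures.
From mathcomp Require Import all_boot all_order.
From mathcomp Require Import finmap.
Set Implicit Arguments. Unset Strict Implicit. Unset Printing Implicit Defensive.
Local Open Scope fset_scope.

(* Negation-free Boolean expressions with leaves b_v (v : V) or constants.
   Conjunctions/disjunctions are indexed by an arbitrary index type (in the
   intended use these are finite). *)
Inductive bexpr (V : Type) : Type :=
| BVar of V
| BConst of bool
| BAnd (I : Type) of (I -> bexpr V)
| BOr (I : Type) of (I -> bexpr V).

Arguments BConst {V} b.

Fixpoint beval (V : Type) (rho : V -> bool) (t : bexpr V) : Prop :=
  match t with
  | BVar v => rho v
  | BConst b => b
  | BAnd _ f => forall i, beval rho (f i)
  | BOr _ f => exists i, beval rho (f i)
  end.

Section Theory.
(* A theory: predicates P, the negation operation on predicates,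
   rule instances  rule (Some g) gs  meaning  g :- gs, and  rule None gs
   meaning  bot :- gs, and the semantic notion "H is unsatisfiable in T". *)
Variables (P : choiceType) (neg : P -> P)
          (rule : option P -> seq P -> Prop) (unsat : {fset P} -> Prop).

Definition tilde (H : {fset P}) : {fset P} := [fset neg h | h in H].

Fixpoint satW (N : nat) (H : {fset P}) : P -> Prop :=
  match N with
  | 0 => fun g => g \in H
  | N'.+1 => fun g => satW N' H g \/
      exists gs, rule (Some g) gs /\ forall x, x \in gs -> satW N' H x
  end.

Definition Sat_unsat (N : nat) (H : {fset P}) : Prop :=
  exists gs, rule None gs /\ forall x, x \in gs -> satW N H x.

Definition bounded_saturation (d : {fset P} -> nat) : Prop :=
  forall (H : {fset P}) (N : nat), d H <= N -> (Sat_unsat N H <-> unsat H).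

Definition DP_unsat (d : {fset P} -> nat) (H : {fset P}) : Prop :=
  Sat_unsat (d H) H.

Definition Dmax (d : {fset P} -> nat) (S : {fset P}) : nat :=
  \max_(S' <- fpowerset S) d S'.

Section SDP.
Variables (G E : {fset P}).
Let W0 : {fset P} := G `|` tilde E.

Fixpoint tau (i : nat) (g : P) : bexpr P :=
  match i with
  | 0 => if g \in tilde E then BConst true
         else if g \in G then BVar g else BConst false
  | i'.+1 =>
      BOr (fun k : (satW i' W0 g +
                    {gs : seq P | rule (Some g) gs /\
                                  forall x, x \in gs -> satW i' W0 x})%type =>
             match k with
             | inl _ => tau i' g
             | inr s => BAnd (fun x : {x : P | x \in sval s} => tau i' (sval x))
             end)
  end.

Definition SDP_N (d : {fset P} -> nat) : nat := Dmax d W0.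

Definition SDP (d : {fset P} -> nat) : bexpr P :=
  let N := SDP_N d in
  BOr (fun s : {gs : seq P | rule None gs /\ forall x, x \in gs -> satW N W0 x} =>
         BAnd (fun x : {x : P | x \in sval s} => tau N (sval x))).
End SDP.
End Theory.

(* Main.v *)
Require Import Defs.
From mathcomp Require Import all_boot all_order.
From mathcomp Require Import finmap.
Local Open Scope fset_scope.

Lemma satW_mono (P : choiceType) (rule : option P -> seq P -> Prop)
  (H1 H2 : {fset P}) : H1 `<=` H2 -> forall i g, satW rule i H1 g -> satW rule i H2 g.
Proof.
move=> sub; elim=> [|i IH] g /=.
  by move=> h; apply: (fsubsetP sub).
case=> [h|[gs [r h]]]; first by left; apply: IH.
by right; exists gs; split=> // x /h; apply: IH.
Qed.

Lemma tau_correct (P : choiceType) (neg : P -> P)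
    (rule : option P -> seq P -> Prop) (G E G' : {fset P}) (hG' : G' `<=` G) :
  forall i g, beval (fun g => g \in G') (tau neg rule G E i g) <->
              satW rule i (G' `|` tilde neg E) g.
Proof.
have sub : G' `|` tilde neg E `<=` G `|` tilde neg E by apply: fsetSU.
elim=> [|i IH] g /=.
  rewrite in_fsetU.
  case: (boolP (g \in tilde neg E)) => hE /=; first by rewrite orbT.
  rewrite orbF; case: (boolP (g \in G)) => hG //=.
  split=> // h; case/negP: hG; exact: (fsubsetP hG').
split.
  case=> [[k|[gs [r h]]]] /=.
    by move/IH => ?; left.
  move=> hb; right; exists gs; split=> // x xin.
  by apply/IH; apply: (hb (exist _ x xin)).
case=> [h|[gs [r h]]].
  by exists (inl (@satW_mono _ rule _ _ sub _ _ h)); apply/IH.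
exists (inr (exist _ gs (conj r (fun x xin => @satW_mono _ rule _ _ sub _ _ (h x xin))))) => /=.
by case=> x xin /=; apply/IH; apply: h.
Qed.

Theorem theorem3p3 (P : choiceType) (neg : P -> P)
    (rule : option P -> seq P -> Prop) (unsat : {fset P} -> Prop)
    (d : {fset P} -> nat) (hT : bounded_saturation rule unsat d)
    (G E : {fset P}) (G' : {fset P}) (hG' : G' `<=` G) :
  beval (fun g => g \in G') (SDP neg rule G E d) <->
  DP_unsat rule d (G' `|` tilde neg E).
Proof.
have sub : G' `|` tilde neg E `<=` G `|` tilde neg E by apply: fsetSU.
set N := SDP_N neg G E d.
have hN : d (G' `|` tilde neg E) <= N.
  rewrite /N /SDP_N /Dmax.
  apply: (@leq_bigmax_seq _ _ _ (fun S => d S)) => //.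
  by rewrite fpowersetE.
have step : beval (fun g => g \in G') (SDP neg rule G E d) <->
            Sat_unsat rule N (G' `|` tilde neg E).
  rewrite /SDP /=; split.
    case=> [[gs [r h]]] /= hb; exists gs; split=> // x xin.
    by apply/(@tau_correct _ neg rule G E G' hG' _ _); apply: (hb (exist _ x xin)).
  case=> gs [r h].
  exists (exist _ gs (conj r (fun x xin => @satW_mono _ rule _ _ sub _ _ (h x xin)))) => /=.
  by case=> x xin /=; apply/(@tau_correct _ neg rule G E G' hG' _ _); apply: h.
rewrite step /DP_unsat.
rewrite (hT _ _ hN) (hT _ _ (leqnn _)); done.
Qed.
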